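(* Let $G_0$ be the group of homeomorphisms of $\mathbb{R}$ generated by $a,b,c$ as in the context. The assignment $a\mapsto(1,0,0)$, $b\mapsto(0,1,0)$, $c\mapsto(0,0,1)$ extends to a surjective homomorphism $\pi:G_0\to\mathbb{Z}^3$ whose kernel is exactly the commutator subgroup $G_0'=[G_0,G_0]$.
   Context: The three generating homeomorphisms of $\mathbb{R}$ are as follows. - $a(t)=t+1$. - $b(t)=t$ for $t\le 0$, $b(t)=t/(1-t)$ for $0\le t\le 1/2$, $b(t)=(3t-1)/t$ for $1/2\le t\le 1$, $b(t)=t+1$ for $t\ge 1$. - $c(t)=2t/(t+1)$ for $0\le t\le 1$, and $c(t)=t$ otherwise. (In binary-sequence notation these are the maps $x$, $x_{\mathtt1}$, $y_{\mathtt{10}}$.) *)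

(* Defs.v *)
From Stdlib Require Import Reals ZArith.
Open Scope R_scope.

Definition ga (t : R) : R := t + 1.

Definition gb (t : R) : R :=
  if Rle_dec t 0 then t
  else if Rle_dec t (1/2) then t / (1 - t)
  else if Rle_dec t 1 then (3 * t - 1) / t
  else t + 1.

Definition gc (t : R) : R :=
  if Rle_dec 0 t then (if Rle_dec t 1 then 2 * t / (t + 1) else t) else t.

Definition gcomp (f g : R -> R) : R -> R := fun x => f (g x).

Definition inverse_of (f g : R -> R) : Prop :=
  (forall x, g (f x) = x) /\ (forall x, f (g x) = x).

Inductive InG0 : (R -> R) -> Prop :=
| G0_id : InG0 (fun x => x)
| G0_a : InG0 ga
| G0_b : InG0 gb
| G0_c : InG0 gc
| G0_comp : forall f g, InG0 f -> InG0 g -> InG0 (gcomp f g)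
| G0_inv : forall f g, InG0 f -> inverse_of f g -> InG0 g.

Inductive InComm : (R -> R) -> Prop :=
| Comm_id : InComm (fun x => x)
| Comm_gen : forall f g f' g', InG0 f -> InG0 g ->
    inverse_of f f' -> inverse_of g g' ->
    InComm (gcomp f' (gcomp g' (gcomp f g)))
| Comm_comp : forall f g, InComm f -> InComm g -> InComm (gcomp f g)
| Comm_inv : forall f g, InComm f -> inverse_of f g -> InComm g.

Definition Z3 : Type := (Z * Z * Z)%type.
Definition z3add (u v : Z3) : Z3 :=
  let '(u1, u2, u3) := u in let '(v1, v2, v3) := v in
  ((u1 + v1)%Z, (u2 + v2)%Z, (u3 + v3)%Z).
Definition z3zero : Z3 := (0%Z, 0%Z, 0%Z).

(* Main.v *)
Require Import Defs.
From Stdlib Require Import Reals ZArith Lra Lia List Permutation ClassicalEpsilon FunctionalExtensionality.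
Open Scope R_scope.

Record mob := Mob { ma : R; mb : R; mc : R; md : R }.
Definition mden (M:mob) t := mc M * t + md M.
Definition mev (M:mob) t := (ma M * t + mb M) / mden M t.
Definition mdet M := ma M * md M - mb M * mc M.
Definition mD M x := mdet M / (mden M x * mden M x).
Definition mmul N M := Mob (ma N*ma M + mb N*mc M) (ma N*mb M + mb N*md M)
  (mc N*ma M + md N*mc M) (mc N*mb M + md N*md M).
Definition minv M := Mob (md M) (- mb M) (- mc M) (ma M).

Lemma mden_mul N M t : mden M t <> 0 ->
  mden (mmul N M) t = mden N (mev M t) * mden M t.
Proof. intros H. unfold mev, mmul, mden in *; simpl. field. auto. Qed.

Lemma mev_mul N M t : mden M t <> 0 -> mden N (mev M t) <> 0 ->
  mev (mmul N M) t = mev N (mev M t).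
Proof.
  intros H1 H2. unfold mev at 1. rewrite mden_mul by auto.
  unfold mev at 1. unfold mev, mmul, mden in *; simpl in *.
  field. split; auto. intro E; apply H2.
  replace (mc N * ((ma M * t + mb M) / (mc M * t + md M)) + md N) with
   ((mc N * (ma M * t + mb M) + md N * (mc M * t + md M)) / (mc M * t + md M)) by (field; auto).
  rewrite E. unfold Rdiv; ring.
Qed.

Lemma mdet_mul N M : mdet (mmul N M) = mdet N * mdet M.
Proof. unfold mdet, mmul; simpl; ring. Qed.

Lemma mD_mul N M x : mden M x <> 0 -> mden N (mev M x) <> 0 ->
  mD (mmul N M) x = mD N (mev M x) * mD M x.
Proof.
  intros H1 H2. unfold mD. rewrite mden_mul by auto. rewrite mdet_mul.
  field. split; auto.
Qed.

Lemma mden_inv M t : mden M t <> 0 ->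
  mden (minv M) (mev M t) = mdet M / mden M t.
Proof. intros H. unfold mev, minv, mdet, mden in *; simpl. field. auto. Qed.

Lemma mev_inv M t : mden M t <> 0 -> mdet M <> 0 ->
  mev (minv M) (mev M t) = t.
Proof.
  intros H1 H2. unfold mev at 1. rewrite mden_inv by auto.
  unfold mev, minv, mdet, mden in *; simpl in *. field. split; auto.
Qed.

Lemma mdet_inv M : mdet (minv M) = mdet M.
Proof. unfold mdet, minv; simpl; ring. Qed.

Lemma mD_inv M x : mden M x <> 0 -> mdet M <> 0 ->
  mD (minv M) (mev M x) = / mD M x.
Proof.
  intros H1 H2. unfold mD. rewrite mden_inv by auto. rewrite mdet_inv.
  field. split; auto.
Qed.

Lemma mD_pos M x : mdet M > 0 -> mden M x <> 0 -> mD M x > 0.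
Proof.
  intros H1 H2. unfold mD. apply Rdiv_lt_0_compat; auto.
  assert (0 < mden M x * mden M x) by nra. lra.
Qed.

Lemma mev_diff M x h : h <> 0 -> mden M x <> 0 -> mden M (x+h) <> 0 ->
  (mev M (x+h) - mev M x) / h = mdet M / (mden M (x+h) * mden M x).
Proof.
  intros H0 H1 H2. unfold mev, mdet, mden in *. field. auto.
Qed.

Lemma cross a b c d : b <> 0 -> d <> 0 -> a / b = c / d -> a * d = c * b.
Proof. intros Hb Hd E. apply (f_equal (fun z => z * b * d)) in E. field_simplify in E; auto. rewrite E; ring. Qed.
Lemma uncross a b c d : b <> 0 -> d <> 0 -> a * d = c * b -> a / b = c / d.
Proof. intros Hb Hd E. apply (Rmult_eq_reg_r (b*d)). 2: apply Rmult_integral_contrapositive_currified; auto. field_simplify; auto. rewrite E; ring. Qed.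

Lemma uniq_alg M1 M2 x h1 h2 : h1 <> 0 -> h2 <> 0 -> h1 <> h2 ->
  mden M1 x <> 0 -> mden M2 x <> 0 ->
  mden M1 (x+h1) <> 0 -> mden M2 (x+h1) <> 0 ->
  mden M1 (x+h2) <> 0 -> mden M2 (x+h2) <> 0 ->
  mev M1 x = mev M2 x -> mev M1 (x+h1) = mev M2 (x+h1) -> mev M1 (x+h2) = mev M2 (x+h2) ->
  mD M1 x = mD M2 x.
Proof.
  intros. 
  assert (E1 : mdet M1 / (mden M1 (x+h1) * mden M1 x) = mdet M2 / (mden M2 (x+h1) * mden M2 x)).
  { rewrite <- !mev_diff by auto. congruence. }
  assert (E2 : mdet M1 / (mden M1 (x+h2) * mden M1 x) = mdet M2 / (mden M2 (x+h2) * mden M2 x)).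
  { rewrite <- !mev_diff by auto. congruence. }
  set (p1 := mden M1 x) in *. set (p2 := mden M2 x) in *.
  assert (D1 : forall h, mden M1 (x+h) = p1 + mc M1 * h) by (intros; unfold p1, mden; ring).
  assert (D2 : forall h, mden M2 (x+h) = p2 + mc M2 * h) by (intros; unfold p2, mden; ring).
  rewrite D1, D2 in *.
  set (d1 := mdet M1) in *. set (d2 := mdet M2) in *.
  set (c1 := mc M1) in *. set (c2 := mc M2) in *.
  assert (F1 : d1 * ((p2 + c2*h1) * p2) = d2 * ((p1 + c1*h1)*p1)).
  { apply cross in E1; auto; apply Rmult_integral_contrapositive_currified; auto. }
  assert (F2 : d1 * ((p2 + c2*h2) * p2) = d2 * ((p1 + c1*h2)*p1)).
  { apply cross in E2; auto; apply Rmult_integral_contrapositive_currified; auto. }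
  assert (G : (h1 - h2) * (d1 * c2 * p2 - d2 * c1 * p1) = 0) by (rewrite <- (Rminus_diag_eq _ _ F1) at 1; nra).
  apply Rmult_integral in G. destruct G as [G|G]. { exfalso; lra. }
  assert (G2 : d1 * (p2 * p2) = d2 * (p1 * p1)) by nra.
  unfold mD. fold p1 p2 d1 d2.
  apply uncross; auto; apply Rmult_integral_contrapositive_currified; auto.
Qed.

Definition RG (f:R->R) x M := exists e, e > 0 /\ forall t, x <= t < x + e -> mden M t <> 0 /\ f t = mev M t.
Definition LG (f:R->R) x M := exists e, e > 0 /\ forall t, x - e < t <= x -> mden M t <> 0 /\ f t = mev M t.

Lemma RG_uniq f x M1 M2 : RG f x M1 -> RG f x M2 -> mD M1 x = mD M2 x.
Proof.
  intros [e1 [He1 H1]] [e2 [He2 H2]].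
  set (e := Rmin e1 e2).
  assert (He : e > 0) by (unfold e; apply Rmin_glb_lt; auto).
  assert (Hm1 : e <= e1) by apply Rmin_l. assert (Hm2 : e <= e2) by apply Rmin_r.
  destruct (H1 x) as [A1 B1]; [lra|]. destruct (H2 x) as [A2 B2]; [lra|].
  destruct (H1 (x + e/2)) as [A3 B3]; [lra|]. destruct (H2 (x+e/2)) as [A4 B4]; [lra|].
  destruct (H1 (x + e/4)) as [A5 B5]; [lra|]. destruct (H2 (x+e/4)) as [A6 B6]; [lra|].
  apply (uniq_alg M1 M2 x (e/2) (e/4)); auto; try lra; congruence.
Qed.

Lemma LG_uniq f x M1 M2 : LG f x M1 -> LG f x M2 -> mD M1 x = mD M2 x.
Proof.
  intros [e1 [He1 H1]] [e2 [He2 H2]].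
  set (e := Rmin e1 e2).
  assert (He : e > 0) by (unfold e; apply Rmin_glb_lt; auto).
  assert (Hm1 : e <= e1) by apply Rmin_l. assert (Hm2 : e <= e2) by apply Rmin_r.
  destruct (H1 x) as [A1 B1]; [lra|]. destruct (H2 x) as [A2 B2]; [lra|].
  destruct (H1 (x + -(e/2))) as [A3 B3]; [lra|]. destruct (H2 (x+ -(e/2))) as [A4 B4]; [lra|].
  destruct (H1 (x + -(e/4))) as [A5 B5]; [lra|]. destruct (H2 (x+ -(e/4))) as [A6 B6]; [lra|].
  apply (uniq_alg M1 M2 x (-(e/2)) (-(e/4))); auto; try lra; congruence.
Qed.

Definition imob : inhabited mob := inhabits (Mob 1 0 0 1).
Definition rd f x := mD (epsilon imob (fun M => RG f x M /\ mdet M > 0)) x.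
Definition ld f x := mD (epsilon imob (fun M => LG f x M /\ mdet M > 0)) x.

Lemma rd_eq f x M : RG f x M -> mdet M > 0 -> rd f x = mD M x.
Proof.
  intros H1 H2. unfold rd.
  destruct (epsilon_spec imob (fun M => RG f x M /\ mdet M > 0)) as [A B]; eauto.
  eapply RG_uniq; eauto.
Qed.
Lemma ld_eq f x M : LG f x M -> mdet M > 0 -> ld f x = mD M x.
Proof.
  intros H1 H2. unfold ld.
  destruct (epsilon_spec imob (fun M => LG f x M /\ mdet M > 0)) as [A B]; eauto.
  eapply LG_uniq; eauto.
Qed.

Lemma RG_den f x M : RG f x M -> mden M x <> 0 /\ f x = mev M x.
Proof. intros [e [He H]]. apply H. lra. Qed.
Lemma LG_den f x M : LG f x M -> mden M x <> 0 /\ f x = mev M x.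
Proof. intros [e [He H]]. apply H. lra. Qed.

Definition F f x := ln (rd f x / ld f x).

Lemma F_eq f x M N : RG f x M -> mdet M > 0 -> LG f x N -> mdet N > 0 ->
  F f x = ln (mD M x / mD N x).
Proof. intros. unfold F. rewrite (rd_eq f x M), (ld_eq f x N); auto. Qed.

Definition Good (f : R -> R) : Prop :=
  (forall x y, x < y -> f x < f y) /\ (forall y, exists x, f x = y) /\
  (forall x, exists M, RG f x M /\ mdet M > 0) /\
  (forall x, exists M, LG f x M /\ mdet M > 0) /\
  (exists L, forall x, F f x <> 0 -> In x L) /\
  (exists (n:Z) T, forall t, t <= T -> f t = t + IZR n) /\
  (exists (n:Z) T, forall t, T <= t -> f t = t + IZR n).

Definition strict (f : R -> R) := forall x y, x < y -> f x < f y.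
Definition surj (f : R -> R) := forall y, exists x, f x = y.

Lemma mono_le f x y : strict f -> x <= y -> f x <= f y.
Proof. intros H Hxy. destruct (Req_dec x y). subst; lra. left; apply H; lra. Qed.
Lemma mono_rev f x y : strict f -> f x < f y -> x < y.
Proof. intros H Hxy. destruct (Rlt_le_dec x y); auto. apply (mono_le f) in r; auto. lra. Qed.
Lemma strict_inj f x y : strict f -> f x = f y -> x = y.
Proof. intros H E. destruct (Rtotal_order x y) as [h|[h|h]]; auto; apply H in h; lra. Qed.

Lemma RG_comp f g x M N : strict g -> surj g -> RG g x M -> RG f (g x) N ->
  RG (gcomp f g) x (mmul N M).
Proof.
  intros Hs Hu [e1 [He1 H1]] [e2 [He2 H2]].
  destruct (Hu (g x + e2)) as [t0 Ht0].
  assert (Hx : x < t0) by (apply (mono_rev g); auto; lra).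
  exists (Rmin e1 (t0 - x)). split. apply Rmin_glb_lt; lra.
  intros t Ht. assert (Hm1 := Rmin_l e1 (t0 - x)). assert (Hm2 := Rmin_r e1 (t0 - x)).
  destruct (H1 t) as [A B]; [lra|].
  assert (g x <= g t) by (apply mono_le; auto; lra).
  assert (g t < g t0) by (apply Hs; lra).
  destruct (H2 (g t)) as [C D]; [lra|].
  rewrite B in C, D. unfold gcomp. rewrite B, D.
  split. rewrite mden_mul by auto. apply Rmult_integral_contrapositive_currified; auto.
  symmetry; apply mev_mul; auto.
Qed.

Lemma LG_comp f g x M N : strict g -> surj g -> LG g x M -> LG f (g x) N ->
  LG (gcomp f g) x (mmul N M).
Proof.
  intros Hs Hu [e1 [He1 H1]] [e2 [He2 H2]].
  destruct (Hu (g x - e2)) as [t0 Ht0].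
  assert (Hx : t0 < x) by (apply (mono_rev g); auto; lra).
  exists (Rmin e1 (x - t0)). split. apply Rmin_glb_lt; lra.
  intros t Ht. assert (Hm1 := Rmin_l e1 (x - t0)). assert (Hm2 := Rmin_r e1 (x - t0)).
  destruct (H1 t) as [A B]; [lra|].
  assert (g t <= g x) by (apply mono_le; auto; lra).
  assert (g t0 < g t) by (apply Hs; lra).
  destruct (H2 (g t)) as [C D]; [lra|].
  rewrite B in C, D. unfold gcomp. rewrite B, D.
  split. rewrite mden_mul by auto. apply Rmult_integral_contrapositive_currified; auto.
  symmetry; apply mev_mul; auto.
Qed.

Lemma ln_quot4 a b c d : a > 0 -> b > 0 -> c > 0 -> d > 0 ->
  ln ((a * b) / (c * d)) = ln (b / d) + ln (a / c).
Proof.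
  intros. replace ((a*b)/(c*d)) with ((b/d)*(a/c)) by (field; lra).
  apply ln_mult; apply Rdiv_lt_0_compat; lra.
Qed.

Lemma F_comp f g x M M' N N' : strict g -> surj g ->
  RG g x M -> mdet M > 0 -> LG g x M' -> mdet M' > 0 ->
  RG f (g x) N -> mdet N > 0 -> LG f (g x) N' -> mdet N' > 0 ->
  F (gcomp f g) x = F g x + F f (g x).
Proof.
  intros Hs Hu R1 D1 L1 D2 R2 D3 L2 D4.
  rewrite (F_eq (gcomp f g) x (mmul N M) (mmul N' M')).
  2: apply RG_comp; auto. 2: rewrite mdet_mul; apply Rmult_lt_0_compat; lra.
  2: apply LG_comp; auto. 2: rewrite mdet_mul; apply Rmult_lt_0_compat; lra.
  rewrite (F_eq g x M M'), (F_eq f (g x) N N'); auto.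
  destruct (RG_den _ _ _ R1) as [A1 B1]. destruct (LG_den _ _ _ L1) as [A2 B2].
  destruct (RG_den _ _ _ R2) as [A3 B3]. destruct (LG_den _ _ _ L2) as [A4 B4].
  rewrite B1 in A3. rewrite B2 in A4.
  rewrite !mD_mul by auto. rewrite <- B1, <- B2.
  rewrite ln_quot4; auto; apply mD_pos; auto; congruence.
Qed.

Lemma inv_strict f g : strict f -> inverse_of f g -> strict g.
Proof.
  intros Hs [Hl Hr] x y Hxy. destruct (Rlt_le_dec (g x) (g y)); auto.
  apply (mono_le f) in r; auto. rewrite !Hr in r. lra.
Qed.

Lemma RG_inv f g y M : strict f -> inverse_of f g -> RG f (g y) M -> mdet M > 0 ->
  RG g y (minv M).
Proof.
  intros Hs Hi [e [He H]] Hd. pose proof (inv_strict f g Hs Hi) as Hg.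
  destruct Hi as [Hl Hr].
  set (x := g y) in *.
  assert (Ey : f x = y) by (unfold x; apply Hr).
  assert (Hs0 : y < f (x + e/2)) by (rewrite <- Ey; apply Hs; lra).
  exists (f (x + e/2) - y). split; [lra|].
  intros s Hs1.
  assert (x <= g s) by (unfold x; apply mono_le; auto; lra).
  assert (g s < x + e/2).
  { destruct (Rlt_le_dec (g s) (x + e/2)); auto. apply (mono_le f) in r; auto.
    rewrite Hr in r. lra. }
  destruct (H (g s)) as [A B]; [lra|]. rewrite Hr in B.
  split.
  - rewrite B. rewrite mden_inv by auto. apply Rmult_integral_contrapositive_currified; auto.
    lra. apply Rinv_neq_0_compat; auto.
  - rewrite B at 2. rewrite mev_inv; auto; lra.
Qed.

Lemma LG_inv f g y M : strict f -> inverse_of f g -> LG f (g y) M -> mdet M > 0 ->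
  LG g y (minv M).
Proof.
  intros Hs Hi [e [He H]] Hd. pose proof (inv_strict f g Hs Hi) as Hg.
  destruct Hi as [Hl Hr].
  set (x := g y) in *.
  assert (Ey : f x = y) by (unfold x; apply Hr).
  assert (Hs0 : f (x - e/2) < y) by (rewrite <- Ey; apply Hs; lra).
  exists (y - f (x - e/2)). split; [lra|].
  intros s Hs1.
  assert (g s <= x) by (unfold x; apply mono_le; auto; lra).
  assert (x - e/2 < g s).
  { destruct (Rlt_le_dec (x - e/2) (g s)); auto. apply (mono_le f) in r; auto.
    rewrite Hr in r. lra. }
  destruct (H (g s)) as [A B]; [lra|]. rewrite Hr in B.
  split.
  - rewrite B. rewrite mden_inv by auto. apply Rmult_integral_contrapositive_currified; auto.
    lra. apply Rinv_neq_0_compat; auto.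
  - rewrite B at 2. rewrite mev_inv; auto; lra.
Qed.

Lemma F_inv f g y M N : strict f -> inverse_of f g ->
  RG f (g y) M -> mdet M > 0 -> LG f (g y) N -> mdet N > 0 ->
  F g y = - F f (g y).
Proof.
  intros Hs Hi R1 D1 L1 D2.
  rewrite (F_eq g y (minv M) (minv N)).
  2: apply (RG_inv f); auto. 2: rewrite mdet_inv; auto.
  2: apply (LG_inv f); auto. 2: rewrite mdet_inv; auto.
  rewrite (F_eq f (g y) M N); auto.
  destruct (RG_den _ _ _ R1) as [A1 B1]. destruct (LG_den _ _ _ L1) as [A2 B2].
  destruct Hi as [Hl Hr]. rewrite Hr in B1, B2.
  assert (P1 := mD_pos M (g y) D1 A1). assert (P2 := mD_pos N (g y) D2 A2).
  assert (E1 : mD (minv M) y = / mD M (g y)).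
  { transitivity (mD (minv M) (mev M (g y))). f_equal; auto. apply mD_inv; auto; lra. }
  assert (E2 : mD (minv N) y = / mD N (g y)).
  { transitivity (mD (minv N) (mev N (g y))). f_equal; auto. apply mD_inv; auto; lra. }
  rewrite E1, E2.
  replace (/ mD M (g y) / / mD N (g y)) with (/ (mD M (g y) / mD N (g y))) by (field; lra).
  apply ln_Rinv. apply Rdiv_lt_0_compat; lra.
Qed.

Definition inv (g:R->R) y := epsilon (inhabits 0) (fun x => g x = y).
Lemma inv_r g y : surj g -> g (inv g y) = y.
Proof. intros H. unfold inv. apply (epsilon_spec (inhabits 0) (fun x => g x = y)). apply H. Qed.
Lemma inv_l g x : strict g -> surj g -> inv g (g x) = x.
Proof. intros H1 H2. apply (strict_inj g); auto. apply inv_r; auto. Qed.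

Lemma Good_comp f g : Good f -> Good g -> Good (gcomp f g).
Proof.
  intros [sf [uf [rf [lf [[Lf cf] [[n1 [T1 e1]] [m1 [S1 p1]]]]]]]].
  intros [sg [ug [rg [lg [[Lg cg] [[n2 [T2 e2]] [m2 [S2 p2]]]]]]]].
  split; [|split; [|split; [|split; [|split; [|split]]]]].
  - intros x y H. unfold gcomp. apply sf, sg, H.
  - intros y. destruct (uf y) as [x1 H1]. destruct (ug x1) as [x2 H2]. exists x2. unfold gcomp. congruence.
  - intros x. destruct (rg x) as [M [HM DM]]. destruct (rf (g x)) as [N [HN DN]].
    exists (mmul N M). split. apply RG_comp; auto. rewrite mdet_mul; apply Rmult_lt_0_compat; lra.
  - intros x. destruct (lg x) as [M [HM DM]]. destruct (lf (g x)) as [N [HN DN]].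
    exists (mmul N M). split. apply LG_comp; auto. rewrite mdet_mul; apply Rmult_lt_0_compat; lra.
  - exists (Lg ++ map (inv g) Lf). intros x Hx.
    destruct (rg x) as [M [HM DM]]. destruct (rf (g x)) as [N [HN DN]].
    destruct (lg x) as [M' [HM' DM']]. destruct (lf (g x)) as [N' [HN' DN']].
    rewrite (F_comp f g x M M' N N') in Hx; auto.
    apply in_or_app. destruct (Req_dec (F g x) 0) as [E|E].
    + right. rewrite E in Hx. rewrite <- (inv_l g x) by auto. apply in_map. apply cf. lra.
    + left. apply cg, E.
  - exists (n1 + n2)%Z, (Rmin T2 (T1 - IZR n2)). intros t Ht.
    assert (Hm1 := Rmin_l T2 (T1 - IZR n2)). assert (Hm2 := Rmin_r T2 (T1 - IZR n2)).
    unfold gcomp. rewrite e2 by lra. rewrite e1 by lra. rewrite plus_IZR. ring.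
  - exists (m1 + m2)%Z, (Rmax S2 (S1 - IZR m2)). intros t Ht.
    assert (Hm1 := Rmax_l S2 (S1 - IZR m2)). assert (Hm2 := Rmax_r S2 (S1 - IZR m2)).
    unfold gcomp. rewrite p2 by lra. rewrite p1 by lra. rewrite plus_IZR. ring.
Qed.

Lemma Good_inv f g : Good f -> inverse_of f g -> Good g.
Proof.
  intros [sf [uf [rf [lf [[Lf cf] [[n1 [T1 e1]] [m1 [S1 p1]]]]]]]] Hi.
  pose proof Hi as [Hl Hr].
  split; [|split; [|split; [|split; [|split; [|split]]]]].
  - apply (inv_strict f); auto.
  - intros y. exists (f y). apply Hl.
  - intros y. destruct (rf (g y)) as [M [HM DM]]. exists (minv M). split.
    apply (RG_inv f); auto. rewrite mdet_inv; auto.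
  - intros y. destruct (lf (g y)) as [M [HM DM]]. exists (minv M). split.
    apply (LG_inv f); auto. rewrite mdet_inv; auto.
  - exists (map f Lf). intros y Hy.
    destruct (rf (g y)) as [M [HM DM]]. destruct (lf (g y)) as [N [HN DN]].
    rewrite (F_inv f g y M N) in Hy; auto.
    rewrite <- (Hr y). apply in_map, cf. intro E; apply Hy; rewrite E; ring.
  - exists (- n1)%Z, (T1 + IZR n1). intros s Hs.
    assert (E : f (s - IZR n1) = s) by (rewrite e1 by lra; ring).
    rewrite <- E at 1. rewrite Hl. rewrite opp_IZR. ring.
  - exists (- m1)%Z, (S1 + IZR m1). intros s Hs.
    assert (E : f (s - IZR m1) = s) by (rewrite p1 by lra; ring).
    rewrite <- E at 1. rewrite Hl. rewrite opp_IZR. ring.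
Qed.

Definition mI := Mob 1 0 0 1.
Definition mT := Mob 1 1 0 1.
Definition mP := Mob 1 0 (-1) 1.
Definition mQ := Mob 3 (-1) 1 0.
Definition mC := Mob 2 0 1 1.

Lemma F_val f x M N : RG f x M -> mdet M > 0 -> LG f x N -> mdet N > 0 ->
  mD M x = mD N x -> F f x = 0.
Proof.
  intros. rewrite (F_eq f x M N); auto. rewrite H3.
  destruct (LG_den _ _ _ H1). pose proof (mD_pos N x H2 H4).
  unfold Rdiv. rewrite Rinv_r by lra. apply ln_1.
Qed.

Ltac mobsolve := intros t Ht; unfold mev, mden; simpl; split; [lra|].

Lemma Good_id : Good (fun x => x).
Proof.
  assert (R1 : forall x, RG (fun x => x) x mI) by (intros x; exists 1; split; [lra|]; mobsolve; field; lra).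
  assert (L1 : forall x, LG (fun x => x) x mI) by (intros x; exists 1; split; [lra|]; mobsolve; field; lra).
  assert (D : mdet mI > 0) by (unfold mdet; simpl; lra).
  split; [|split; [|split; [|split; [|split; [|split]]]]].
  - intros x y H; exact H.
  - intros y; exists y; auto.
  - intros x; exists mI; auto.
  - intros x; exists mI; auto.
  - exists nil. intros x H. exfalso. apply H. apply (F_val _ x mI mI); auto.
  - exists 0%Z, 0. intros t _. simpl. ring.
  - exists 0%Z, 0. intros t _. simpl. ring.
Qed.

Lemma Fa0 x : F ga x = 0.
Proof.
  assert (R1 : RG ga x mT) by (exists 1; split; [lra|]; mobsolve; unfold ga; field; lra).
  assert (L1 : LG ga x mT) by (exists 1; split; [lra|]; mobsolve; unfold ga; field; lra).
  assert (D : mdet mT > 0) by (unfold mdet; simpl; lra).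
  apply (F_val _ x mT mT); auto.
Qed.

Lemma Fid0 x : F (fun x => x) x = 0.
Proof.
  assert (R1 : RG (fun x => x) x mI) by (exists 1; split; [lra|]; mobsolve; field; lra).
  assert (L1 : LG (fun x => x) x mI) by (exists 1; split; [lra|]; mobsolve; field; lra).
  assert (D : mdet mI > 0) by (unfold mdet; simpl; lra).
  apply (F_val _ x mI mI); auto.
Qed.

Lemma Good_a : Good ga.
Proof.
  assert (R1 : forall x, RG ga x mT) by (intros x; exists 1; split; [lra|]; mobsolve; unfold ga; field; lra).
  assert (L1 : forall x, LG ga x mT) by (intros x; exists 1; split; [lra|]; mobsolve; unfold ga; field; lra).
  assert (D : mdet mT > 0) by (unfold mdet; simpl; lra).
  split; [|split; [|split; [|split; [|split; [|split]]]]].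
  - intros x y H; unfold ga; lra.
  - intros y; exists (y - 1); unfold ga; ring.
  - intros x; exists mT; auto.
  - intros x; exists mT; auto.
  - exists nil. intros x H. exfalso. apply H. apply (F_val _ x mT mT); auto.
  - exists 1%Z, 0. intros t _. unfold ga. simpl. ring.
  - exists 1%Z, 0. intros t _. unfold ga. simpl. ring.
Qed.

Lemma gb1 t : t <= 0 -> gb t = t.
Proof. intros H. unfold gb. destruct (Rle_dec t 0); [auto|lra]. Qed.
Lemma gb2 t : 0 <= t <= 1/2 -> gb t = t / (1 - t).
Proof. intros H. unfold gb. destruct (Rle_dec t 0).
  assert (t = 0) by lra. subst. field.
  destruct (Rle_dec t (1/2)); [auto|lra]. Qed.
Lemma gb3 t : 1/2 <= t <= 1 -> gb t = (3 * t - 1) / t.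
Proof. intros H. unfold gb. destruct (Rle_dec t 0); [lra|].
  destruct (Rle_dec t (1/2)). assert (t = 1/2) by lra. subst. field.
  destruct (Rle_dec t 1); [auto|lra]. Qed.
Lemma gb4 t : 1 <= t -> gb t = t + 1.
Proof. intros H. unfold gb. destruct (Rle_dec t 0); [lra|].
  destruct (Rle_dec t (1/2)); [lra|].
  destruct (Rle_dec t 1). assert (t = 1) by lra. subst. field. auto. Qed.

Lemma gb_RG x : exists M, RG gb x M /\ mdet M > 0 /\
  (x < 0 -> M = mI) /\ (0 <= x < 1/2 -> M = mP) /\ (1/2 <= x < 1 -> M = mQ) /\ (1 <= x -> M = mT).
Proof.
  destruct (Rlt_le_dec x 0).
  { exists mI. split. exists (-x). split; [lra|]. mobsolve. rewrite gb1 by lra. field; lra.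
    unfold mdet; simpl. repeat split; intros; auto; lra. }
  destruct (Rlt_le_dec x (1/2)).
  { exists mP. split. exists (1/2 - x). split; [lra|]. mobsolve. rewrite gb2 by lra. field; lra.
    unfold mdet; simpl. repeat split; intros; auto; lra. }
  destruct (Rlt_le_dec x 1).
  { exists mQ. split. exists (1 - x). split; [lra|]. mobsolve. rewrite gb3 by lra. field; lra.
    unfold mdet; simpl. repeat split; intros; auto; lra. }
  { exists mT. split. exists 1. split; [lra|]. mobsolve. rewrite gb4 by lra. field; lra.
    unfold mdet; simpl. repeat split; intros; auto; lra. }
Qed.

Lemma gb_LG x : exists M, LG gb x M /\ mdet M > 0 /\
  (x <= 0 -> M = mI) /\ (0 < x <= 1/2 -> M = mP) /\ (1/2 < x <= 1 -> M = mQ) /\ (1 < x -> M = mT).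
Proof.
  destruct (Rle_lt_dec x 0).
  { exists mI. split. exists 1. split; [lra|]. mobsolve. rewrite gb1 by lra. field; lra.
    unfold mdet; simpl. repeat split; intros; auto; lra. }
  destruct (Rle_lt_dec x (1/2)).
  { exists mP. split. exists x. split; [lra|]. mobsolve. rewrite gb2 by lra. field; lra.
    unfold mdet; simpl. repeat split; intros; auto; lra. }
  destruct (Rle_lt_dec x 1).
  { exists mQ. split. exists (x - 1/2). split; [lra|]. mobsolve. rewrite gb3 by lra. field; lra.
    unfold mdet; simpl. repeat split; intros; auto; lra. }
  { exists mT. split. exists (x - 1). split; [lra|]. mobsolve. rewrite gb4 by lra. field; lra.
    unfold mdet; simpl. repeat split; intros; auto; lra. }
Qed.

Lemma div_lt a b c d : b > 0 -> d > 0 -> a * d < c * b -> a / b < c / d.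
Proof. intros. apply (Rmult_lt_reg_r (b*d)). nra.
  replace (a / b * (b * d)) with (a*d) by (field; lra).
  replace (c / d * (b * d)) with (c*b) by (field; lra). auto. Qed.
Lemma div_le_k a b k : b > 0 -> a <= k * b -> a / b <= k.
Proof. intros. apply (Rmult_le_reg_r b). lra.
  replace (a / b * b) with a by (field; lra). lra. Qed.
Lemma div_gt_k a b k : b > 0 -> k * b < a -> k < a / b.
Proof. intros. apply (Rmult_lt_reg_r b). lra.
  replace (a / b * b) with a by (field; lra). lra. Qed.
Lemma div_ge_k a b k : b > 0 -> k * b <= a -> k <= a / b.
Proof. intros. apply (Rmult_le_reg_r b). lra.
  replace (a / b * b) with a by (field; lra). lra. Qed.

Lemma gb_cases x : (x <= 0 /\ gb x = x) \/ (0 < x <= 1/2 /\ gb x = x / (1 - x) /\ 0 < gb x <= 1)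
  \/ (1/2 < x <= 1 /\ gb x = (3*x-1)/x /\ 1 < gb x <= 2) \/ (1 < x /\ gb x = x + 1).
Proof.
  destruct (Rle_lt_dec x 0). left. split; auto. apply gb1; auto.
  destruct (Rle_lt_dec x (1/2)). right; left. rewrite gb2 by lra. repeat split; try lra.
  apply div_gt_k; lra. apply div_le_k; lra.
  destruct (Rle_lt_dec x 1). right; right; left. rewrite gb3 by lra. repeat split; try lra.
  apply div_gt_k; lra. apply div_le_k; lra.
  right; right; right. split; auto. apply gb4; lra.
Qed.

Lemma gb_strict : strict gb.
Proof.
  intros x y H.
  destruct (gb_cases x) as [[A B]|[[A [B C]]|[[A [B C]]|[A B]]]];
  destruct (gb_cases y) as [[A' B']|[[A' [B' C']]|[[A' [B' C']]|[A' B']]]]; try lra.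
  - rewrite B, B'. apply div_lt; nra.
  - rewrite B, B'. apply div_lt; nra.
Qed.

Lemma gb_surj : surj gb.
Proof.
  intros y. destruct (Rle_lt_dec y 0). exists y; apply gb1; auto.
  destruct (Rle_lt_dec y 1). exists (y / (1 + y)).
  assert (0 <= y/(1+y) <= 1/2) by (split; [apply div_ge_k|apply div_le_k]; lra).
  rewrite gb2 by auto. field; repeat split; lra.
  destruct (Rle_lt_dec y 2). exists (1 / (3 - y)).
  assert (1/2 <= 1/(3-y) <= 1) by (split; [apply div_ge_k|apply div_le_k]; lra).
  rewrite gb3 by auto. field; repeat split; lra.
  exists (y - 1). rewrite gb4 by lra. ring.
Qed.

Lemma gc1 t : t <= 0 -> gc t = t.
Proof. intros H. unfold gc. destruct (Rle_dec 0 t); auto.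
  assert (t = 0) by lra. subst. destruct (Rle_dec 0 1); [|lra]. field. Qed.
Lemma gc2 t : 0 <= t <= 1 -> gc t = 2 * t / (t + 1).
Proof. intros H. unfold gc. destruct (Rle_dec 0 t); [|lra]. destruct (Rle_dec t 1); [auto|lra]. Qed.
Lemma gc3 t : 1 <= t -> gc t = t.
Proof. intros H. unfold gc. destruct (Rle_dec 0 t); [|lra]. destruct (Rle_dec t 1); auto.
  assert (t = 1) by lra. subst. field. Qed.

Lemma gc_cases x : (x < 0 /\ gc x = x) \/ (0 <= x <= 1 /\ gc x = 2 * x / (x + 1) /\ 0 <= gc x <= 1)
  \/ (1 < x /\ gc x = x).
Proof.
  destruct (Rlt_le_dec x 0). left. split; auto. apply gc1; lra.
  destruct (Rle_lt_dec x 1). right; left. rewrite gc2 by lra. repeat split; try lra.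
  apply div_ge_k; lra. apply div_le_k; lra.
  right; right. split; auto. apply gc3; lra.
Qed.

Lemma gc_strict : strict gc.
Proof.
  intros x y H.
  destruct (gc_cases x) as [[A B]|[[A [B C]]|[A B]]];
  destruct (gc_cases y) as [[A' B']|[[A' [B' C']]|[A' B']]]; try lra.
  - rewrite B, B'. apply div_lt; nra.
Qed.

Lemma gc_surj : surj gc.
Proof.
  intros y. destruct (Rlt_le_dec y 0). exists y; apply gc1; lra.
  destruct (Rle_lt_dec y 1). exists (y / (2 - y)).
  assert (0 <= y/(2-y) <= 1) by (split; [apply div_ge_k|apply div_le_k]; lra).
  rewrite gc2 by auto. field; repeat split; lra.
  exists y. apply gc3; lra.
Qed.

Lemma Fb0 x : F gb x = 0.
Proof.
    destruct (gb_RG x) as [M [A [B [C1 [C2 [C3 C4]]]]]].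
    destruct (gb_LG x) as [N [A' [B' [C1' [C2' [C3' C4']]]]]].
    apply (F_val _ x M N); auto.
    destruct (Rlt_le_dec x 0). rewrite C1, C1' by lra; auto.
    destruct (Req_dec x 0). subst. rewrite C2, C1' by lra. unfold mD, mdet, mden; simpl; field.
    destruct (Rlt_le_dec x (1/2)). rewrite C2, C2' by lra; auto.
    destruct (Req_dec x (1/2)). subst. rewrite C3, C2' by lra. unfold mD, mdet, mden; simpl; field.
    destruct (Rlt_le_dec x 1). rewrite C3, C3' by lra; auto.
    destruct (Req_dec x 1). subst. rewrite C4, C3' by lra. unfold mD, mdet, mden; simpl; field.
    rewrite C4, C4' by lra; auto.
Qed.

Lemma Good_b : Good gb.
Proof.
  split; [|split; [|split; [|split; [|split; [|split]]]]].
  - apply gb_strict.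
  - apply gb_surj.
  - intros x. destruct (gb_RG x) as [M [A [B _]]]. eauto.
  - intros x. destruct (gb_LG x) as [M [A [B _]]]. eauto.
  - exists nil. intros x H. exfalso. apply H. apply Fb0.
  - exists 0%Z, 0. intros t Ht. rewrite gb1 by lra. simpl. ring.
  - exists 1%Z, 1. intros t Ht. rewrite gb4 by lra. simpl. ring.
Qed.



Lemma gc_RG x : exists M, RG gc x M /\ mdet M > 0 /\
  (x < 0 -> M = mI) /\ (0 <= x < 1 -> M = mC) /\ (1 <= x -> M = mI).
Proof.
  destruct (Rlt_le_dec x 0).
  { exists mI. split. exists (-x). split; [lra|]. mobsolve. rewrite gc1 by lra. field; lra.
    unfold mdet; simpl. repeat split; intros; auto; lra. }
  destruct (Rlt_le_dec x 1).
  { exists mC. split. exists (1 - x). split; [lra|]. mobsolve. rewrite gc2 by lra. field; lra.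
    unfold mdet; simpl. repeat split; intros; auto; lra. }
  { exists mI. split. exists 1. split; [lra|]. mobsolve. rewrite gc3 by lra. field; lra.
    unfold mdet; simpl. repeat split; intros; auto; lra. }
Qed.

Lemma gc_LG x : exists M, LG gc x M /\ mdet M > 0 /\
  (x <= 0 -> M = mI) /\ (0 < x <= 1 -> M = mC) /\ (1 < x -> M = mI).
Proof.
  destruct (Rle_lt_dec x 0).
  { exists mI. split. exists 1. split; [lra|]. mobsolve. rewrite gc1 by lra. field; lra.
    unfold mdet; simpl. repeat split; intros; auto; lra. }
  destruct (Rle_lt_dec x 1).
  { exists mC. split. exists x. split; [lra|]. mobsolve. rewrite gc2 by lra. field; lra.
    unfold mdet; simpl. repeat split; intros; auto; lra. }
  { exists mI. split. exists (x - 1). split; [lra|]. mobsolve. rewrite gc3 by lra. field; lra.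
    unfold mdet; simpl. repeat split; intros; auto; lra. }
Qed.

Lemma F_c x : F gc x = if Req_dec_T x 0 then ln 2 else if Req_dec_T x 1 then ln 2 else 0.
Proof.
  destruct (gc_RG x) as [M [A [B [C1 [C2 C3]]]]].
  destruct (gc_LG x) as [N [A' [B' [C1' [C2' C3']]]]].
  rewrite (F_eq gc x M N) by auto.
  destruct (Req_dec_T x 0). subst. rewrite C2, C1' by lra. f_equal. unfold mD, mdet, mden; simpl; field.
  destruct (Req_dec_T x 1). subst. rewrite C3, C2' by lra. f_equal. unfold mD, mdet, mden; simpl; field.
  assert (mD M x = mD N x).
  { destruct (Rlt_le_dec x 0). rewrite C1, C1' by lra; auto.
    destruct (Rlt_le_dec x 1). rewrite C2, C2' by lra; auto.
    rewrite C3, C3' by lra; auto. }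
  rewrite H. destruct (LG_den _ _ _ A'). pose proof (mD_pos N x B' H0).
  unfold Rdiv. rewrite Rinv_r by lra. apply ln_1.
Qed.

Lemma Good_c : Good gc.
Proof.
  split; [|split; [|split; [|split; [|split; [|split]]]]].
  - apply gc_strict.
  - apply gc_surj.
  - intros x. destruct (gc_RG x) as [M [A [B _]]]. eauto.
  - intros x. destruct (gc_LG x) as [M [A [B _]]]. eauto.
  - exists (0 :: 1 :: nil). intros x H. rewrite F_c in H.
    destruct (Req_dec_T x 0). left; auto. destruct (Req_dec_T x 1). right; left; auto. tauto.
  - exists 0%Z, 0. intros t Ht. rewrite gc1 by lra. simpl. ring.
  - exists 0%Z, 1. intros t Ht. rewrite gc3 by lra. simpl. ring.
Qed.

Definition sumL (G : R -> R) (L : list R) := fold_right (fun x acc => G x + acc) 0 L.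
Definition cover (G : R -> R) L := forall x, G x <> 0 -> In x L.

Lemma sum_filter G P L : (forall x, In x L -> P x = false -> G x = 0) ->
  sumL G L = sumL G (filter P L).
Proof.
  induction L as [|a L IH]; intros H; simpl; auto.
  destruct (P a) eqn:E; simpl.
  - rewrite IH; auto. intros; apply H; simpl; auto.
  - rewrite H; simpl; auto. rewrite IH. ring. intros; apply H; simpl; auto.
Qed.

Lemma sum_perm G L1 L2 : Permutation L1 L2 -> sumL G L1 = sumL G L2.
Proof. induction 1; simpl. reflexivity. rewrite IHPermutation; reflexivity. ring. congruence. Qed.

Definition memb (L : list R) x := if in_dec Req_dec_T x L then true else false.

Lemma sum_indep G L1 L2 : NoDup L1 -> NoDup L2 -> cover G L1 -> cover G L2 ->
  sumL G L1 = sumL G L2.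
Proof.
  intros N1 N2 C1 C2.
  rewrite (sum_filter G (memb L2) L1).
  2:{ intros x _ E. unfold memb in E. destruct (in_dec Req_dec_T x L2); try discriminate.
      destruct (Req_dec (G x) 0); auto. exfalso; auto. }
  rewrite (sum_filter G (memb L1) L2).
  2:{ intros x _ E. unfold memb in E. destruct (in_dec Req_dec_T x L1); try discriminate.
      destruct (Req_dec (G x) 0); auto. exfalso; auto. }
  apply sum_perm. apply NoDup_Permutation; try apply NoDup_filter; auto.
  intros x. rewrite !filter_In. unfold memb.
  destruct (in_dec Req_dec_T x L2); destruct (in_dec Req_dec_T x L1); intuition.
Qed.

Lemma sum_map G g L : sumL G (map g L) = sumL (fun x => G (g x)) L.
Proof. induction L; simpl; auto. rewrite IHL; auto. Qed.
Lemma sum_ext G1 G2 L : (forall x, G1 x = G2 x) -> sumL G1 L = sumL G2 L.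
Proof. intros H; induction L; simpl; auto. rewrite IHL, H; auto. Qed.
Lemma sum_plus G1 G2 L : sumL (fun x => G1 x + G2 x) L = sumL G1 L + sumL G2 L.
Proof. induction L; simpl; try ring. rewrite IHL; ring. Qed.

Definition Phi f := sumL (F f) (epsilon (inhabits nil) (fun L => NoDup L /\ cover (F f) L)).

Lemma Phi_eq f L : NoDup L -> cover (F f) L -> Phi f = sumL (F f) L.
Proof.
  intros N C. unfold Phi.
  destruct (epsilon_spec (inhabits nil) (fun L => NoDup L /\ cover (F f) L)) as [A B]; eauto.
  apply sum_indep; auto.
Qed.

Lemma Good_cover f : Good f -> exists L, NoDup L /\ cover (F f) L.
Proof.
  intros [_ [_ [_ [_ [[L C] _]]]]]. exists (nodup Req_dec_T L). split. apply NoDup_nodup.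
  intros x H. apply nodup_In; auto.
Qed.

Lemma F_comp' f g x : Good f -> Good g -> F (gcomp f g) x = F g x + F f (g x).
Proof.
  intros [sf [uf [rf [lf _]]]] [sg [ug [rg [lg _]]]].
  destruct (rg x) as [M [HM DM]]. destruct (rf (g x)) as [N [HN DN]].
  destruct (lg x) as [M' [HM' DM']]. destruct (lf (g x)) as [N' [HN' DN']].
  apply (F_comp f g x M M' N N'); auto.
Qed.

Lemma Phi_comp f g : Good f -> Good g -> Phi (gcomp f g) = Phi f + Phi g.
Proof.
  intros Gf Gg. destruct (Good_cover f Gf) as [Lf [Nf Cf]].
  destruct (Good_cover g Gg) as [Lg [Ng Cg]].
  pose proof Gg as [sg [ug _]].
  set (L := nodup Req_dec_T (Lg ++ map (inv g) Lf)).
  assert (NL : NoDup L) by apply NoDup_nodup.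
  assert (HL : forall x, In x Lg \/ In (g x) Lf -> In x L).
  { intros x [H|H]; apply nodup_In, in_or_app; auto. right.
    rewrite <- (inv_l g x) by auto. apply in_map; auto. }
  rewrite (Phi_eq (gcomp f g) L NL).
  2:{ intros x H. rewrite F_comp' in H; auto. apply HL.
      destruct (Req_dec (F g x) 0) as [E|E]. right; apply Cf; lra. left; apply Cg; auto. }
  rewrite (sum_ext _ (fun x => F g x + F f (g x))) by (intros; apply F_comp'; auto).
  rewrite sum_plus. rewrite (Phi_eq g L NL) by (intros x H; apply HL; auto).
  rewrite <- (sum_map (F f) g L). rewrite (Phi_eq f (map g L)). ring.
  - apply FinFun.Injective_map_NoDup; auto. intros x y E. apply (strict_inj g); auto.
  - intros y H. rewrite <- (inv_r g y) by auto. apply in_map. apply HL. right.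
    rewrite inv_r by auto. apply Cf; auto.
Qed.

Lemma Phi_zero f : (forall x, F f x = 0) -> Phi f = 0.
Proof. intros H. rewrite (Phi_eq f nil). reflexivity. constructor. intros x Hx; exfalso; auto. Qed.

Lemma Phi_c : Phi gc = 2 * ln 2.
Proof.
  rewrite (Phi_eq gc (0 :: 1 :: nil)).
  - simpl. rewrite !F_c. destruct (Req_dec_T 0 0); [|lra].
    destruct (Req_dec_T 1 0); [lra|]. destruct (Req_dec_T 1 1); [|lra]. ring.
  - constructor. intros [H|[]]; lra. constructor. intros []. constructor.
  - intros x H. rewrite F_c in H.
    destruct (Req_dec_T x 0). left; auto. destruct (Req_dec_T x 1). right; left; auto. tauto.
Qed.

Lemma Good_G0 f : InG0 f -> Good f.
Proof.
  induction 1. apply Good_id. apply Good_a. apply Good_b. apply Good_c.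
  apply Good_comp; auto. eapply Good_inv; eauto.
Qed.

Lemma Good_invof f : Good f -> inverse_of f (inv f).
Proof. intros [s [u _]]. split; intros; [apply inv_l|apply inv_r]; auto. Qed.

Lemma G0_invof f : InG0 f -> InG0 (inv f).
Proof. intros H. apply (G0_inv f); auto. apply Good_invof, Good_G0, H. Qed.

Definition em f := epsilon (inhabits 0%Z) (fun n => exists T, forall t, t <= T -> f t = t + IZR n).
Definition ep f := epsilon (inhabits 0%Z) (fun n => exists T, forall t, T <= t -> f t = t + IZR n).

Lemma em_eq f n T : (forall t, t <= T -> f t = t + IZR n) -> em f = n.
Proof.
  intros H. unfold em.
  destruct (epsilon_spec (inhabits 0%Z) (fun n => exists T, forall t, t <= T -> f t = t + IZR n)) as [T' H']; eauto.
  apply eq_IZR. assert (A:=H (Rmin T T') (Rmin_l _ _)). assert (B := H' (Rmin T T') (Rmin_r _ _)). lra.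
Qed.
Lemma ep_eq f n T : (forall t, T <= t -> f t = t + IZR n) -> ep f = n.
Proof.
  intros H. unfold ep.
  destruct (epsilon_spec (inhabits 0%Z) (fun n => exists T, forall t, T <= t -> f t = t + IZR n)) as [T' H']; eauto.
  apply eq_IZR. assert (A:=H (Rmax T T') (Rmax_l _ _)). assert (B := H' (Rmax T T') (Rmax_r _ _)). lra.
Qed.

Definition Hom (q : (R -> R) -> Z) := q (fun x => x) = 0%Z /\
  forall f g, InG0 f -> InG0 g -> q (gcomp f g) = (q f + q g)%Z.

Lemma Hom_em : Hom em.
Proof.
  split. apply (em_eq _ 0 0). intros; simpl; ring.
  intros f g Hf Hg. apply Good_G0 in Hf, Hg.
  destruct Hf as [_ [_ [_ [_ [_ [[n1 [T1 e1]] _]]]]]].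
  destruct Hg as [_ [_ [_ [_ [_ [[n2 [T2 e2]] _]]]]]].
  rewrite (em_eq f n1 T1), (em_eq g n2 T2) by auto.
  apply (em_eq _ _ (Rmin T2 (T1 - IZR n2))). intros t Ht.
  assert (Hm1 := Rmin_l T2 (T1 - IZR n2)). assert (Hm2 := Rmin_r T2 (T1 - IZR n2)).
  unfold gcomp. rewrite e2 by lra. rewrite e1 by lra. rewrite plus_IZR. ring.
Qed.

Lemma Hom_ep : Hom ep.
Proof.
  split. apply (ep_eq _ 0 0). intros; simpl; ring.
  intros f g Hf Hg. apply Good_G0 in Hf, Hg.
  destruct Hf as [_ [_ [_ [_ [_ [_ [n1 [T1 e1]]]]]]]].
  destruct Hg as [_ [_ [_ [_ [_ [_ [n2 [T2 e2]]]]]]]].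
  rewrite (ep_eq f n1 T1), (ep_eq g n2 T2) by auto.
  apply (ep_eq _ _ (Rmax T2 (T1 - IZR n2))). intros t Ht.
  assert (Hm1 := Rmax_l T2 (T1 - IZR n2)). assert (Hm2 := Rmax_r T2 (T1 - IZR n2)).
  unfold gcomp. rewrite e2 by lra. rewrite e1 by lra. rewrite plus_IZR. ring.
Qed.

Definition c2 := 2 * ln 2.
Lemma c2_pos : c2 > 0. Proof. unfold c2. pose proof ln_lt_2. lra. Qed.

Definition p3 f := epsilon (inhabits 0%Z) (fun k => Phi f = IZR k * c2).

Lemma Phi_id : Phi (fun x => x) = 0.
Proof. apply Phi_zero, Fid0. Qed.

Lemma Phi_int f : InG0 f -> exists k, Phi f = IZR k * c2.
Proof.
  induction 1.
  - exists 0%Z. rewrite Phi_id. simpl; ring.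
  - exists 0%Z. rewrite Phi_zero by apply Fa0. simpl; ring.
  - exists 0%Z. rewrite Phi_zero by apply Fb0. simpl; ring.
  - exists 1%Z. rewrite Phi_c. unfold c2; simpl; ring.
  - destruct IHInG0_1 as [k1 E1]. destruct IHInG0_2 as [k2 E2]. exists (k1 + k2)%Z.
    rewrite Phi_comp by (apply Good_G0; auto). rewrite plus_IZR. lra.
  - destruct IHInG0 as [k E]. exists (- k)%Z.
    assert (Gf := Good_G0 f H). assert (Gg := Good_inv f g Gf H0).
    assert (Phi (gcomp f g) = Phi (fun x => x)).
    { f_equal. apply functional_extensionality. intros x. apply H0. }
    rewrite Phi_comp in H1 by auto. rewrite Phi_id in H1. rewrite opp_IZR. lra.
Qed.

Lemma p3_spec f : InG0 f -> Phi f = IZR (p3 f) * c2.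
Proof.
  intros H. unfold p3. apply (epsilon_spec (inhabits 0%Z) (fun k => Phi f = IZR k * c2)).
  apply Phi_int; auto.
Qed.

Lemma p3_eq f k : InG0 f -> Phi f = IZR k * c2 -> p3 f = k.
Proof.
  intros H E. pose proof (p3_spec f H). pose proof c2_pos. apply eq_IZR.
  apply (Rmult_eq_reg_r c2); lra.
Qed.

Lemma Hom_p3 : Hom p3.
Proof.
  split. apply p3_eq. constructor. rewrite Phi_id. simpl; ring.
  intros f g Hf Hg. apply p3_eq. apply G0_comp; auto.
  rewrite Phi_comp by (apply Good_G0; auto). rewrite (p3_spec f), (p3_spec g) by auto.
  rewrite plus_IZR. ring.
Qed.

Lemma Hom_inv q f g : Hom q -> InG0 f -> inverse_of f g -> q g = (- q f)%Z.
Proof.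
  intros [H0 H1] Hf Hi. assert (Hg : InG0 g) by (apply (G0_inv f); auto).
  assert (gcomp f g = fun x => x) by (apply functional_extensionality; intros; apply Hi).
  pose proof (H1 f g Hf Hg). rewrite H in H2. lia.
Qed.

Definition zp (f : R -> R) (k : Z) : R -> R :=
  match k with
  | Z0 => fun x => x
  | Zpos p => fun x => Nat.iter (Pos.to_nat p) f x
  | Zneg p => fun x => Nat.iter (Pos.to_nat p) (inv f) x
  end.

Lemma iter_G0 f n : InG0 f -> InG0 (fun x => Nat.iter n f x).
Proof.
  intros H. induction n. constructor.
  change (InG0 (gcomp f (fun x => Nat.iter n f x))). constructor; auto.
Qed.

Lemma zp_G0 f k : InG0 f -> InG0 (zp f k).
Proof.
  intros H. destruct k; simpl. constructor. apply iter_G0; auto. apply iter_G0, G0_invof; auto.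
Qed.

Lemma zp_succ f k : Good f -> zp f (k + 1) = gcomp f (zp f k).
Proof.
  intros G. destruct (Good_invof f G) as [Hl Hr].
  destruct k as [|p|p].
  - reflexivity.
  - replace (Z.pos p + 1)%Z with (Z.pos (Pos.succ p)) by lia. simpl.
    rewrite Pos2Nat.inj_succ. reflexivity.
  - destruct (Pos.succ_pred_or p) as [E|E].
    + subst. simpl. apply functional_extensionality; intros x. unfold gcomp. simpl. rewrite Hr. auto.
    + rewrite <- E. replace (Z.neg (Pos.succ (Pos.pred p)) + 1)%Z with (Z.neg (Pos.pred p)).
      2:{ clear. set (q := Pos.pred p). change (Z.neg q) with (- Z.pos q)%Z.
          change (Z.neg (Pos.succ q)) with (- Z.pos (Pos.succ q))%Z.
          rewrite Pos2Z.inj_succ. lia. }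
      simpl. rewrite Pos2Nat.inj_succ. apply functional_extensionality; intros x.
      unfold gcomp. simpl. rewrite Hr. auto.
Qed.

Lemma zp_pred f k : Good f -> zp f (k - 1) = gcomp (inv f) (zp f k).
Proof.
  intros G. destruct (Good_invof f G) as [Hl Hr].
  replace (zp f k) with (zp f ((k - 1) + 1)) by (f_equal; lia).
  rewrite zp_succ by auto. apply functional_extensionality; intros x. unfold gcomp. rewrite Hl. auto.
Qed.

Lemma zp_add f i j : Good f -> zp f (i + j) = gcomp (zp f i) (zp f j).
Proof.
  intros G. revert j. induction i using Z.peano_ind; intros j.
  - reflexivity.
  - replace (Z.succ i + j)%Z with ((i + j) + 1)%Z by lia.
    replace (Z.succ i) with (i + 1)%Z by lia.
    rewrite !zp_succ by auto. rewrite IHi. reflexivity.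
  - replace (Z.pred i + j)%Z with ((i + j) - 1)%Z by lia.
    replace (Z.pred i) with (i - 1)%Z by lia.
    rewrite !zp_pred by auto. rewrite IHi. reflexivity.
Qed.

Lemma Hom_zp q f k : Hom q -> InG0 f -> q (zp f k) = (k * q f)%Z.
Proof.
  intros Hq Hf. assert (G := Good_G0 f Hf). pose proof Hq as [H0 H1].
  induction k using Z.peano_ind.
  - simpl. auto.
  - replace (Z.succ k) with (k + 1)%Z by lia. rewrite zp_succ by auto.
    rewrite H1 by (auto; apply zp_G0; auto). rewrite IHk. lia.
  - replace (Z.pred k) with (k - 1)%Z by lia. rewrite zp_pred by auto.
    rewrite H1 by (try apply G0_invof; try apply zp_G0; auto).
    rewrite (Hom_inv q f (inv f)) by (auto; apply Good_invof; auto). rewrite IHk. lia.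
Qed.

Definition W (u : Z3) : R -> R :=
  let '(i, j, k) := u in gcomp (zp ga i) (gcomp (zp gb j) (zp gc k)).

Lemma W_G0 u : InG0 (W u).
Proof. destruct u as [[i j] k]. cbv beta iota delta [W]. apply G0_comp; [|apply G0_comp]; apply zp_G0; first [exact G0_a|exact G0_b|exact G0_c]. Qed.

Lemma Hom_W q u : Hom q -> q (W u) =
  let '(i, j, k) := u in (i * q ga + j * q gb + k * q gc)%Z.
Proof.
  intros Hq. pose proof Hq as [H0 H1]. destruct u as [[i j] k]. cbv beta iota delta [W].
  assert (Ga := zp_G0 ga i G0_a). assert (Gb := zp_G0 gb j G0_b). assert (Gc := zp_G0 gc k G0_c).
  rewrite (H1 (zp ga i) (gcomp (zp gb j) (zp gc k))) by (auto; apply G0_comp; auto).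
  rewrite (H1 (zp gb j) (zp gc k)) by auto.
  rewrite !Hom_zp by (auto; constructor). lia.
Qed.

Lemma InComm_G0 f : InComm f -> InG0 f.
Proof.
  induction 1.
  - constructor.
  - apply G0_comp; [apply (G0_inv f); auto|]. apply G0_comp; [apply (G0_inv g); auto|]. apply G0_comp; auto.
  - constructor; auto.
  - apply (G0_inv f); auto.
Qed.

Definition ceq f g := exists h, InComm h /\ f = gcomp g h.

Lemma ceq_refl f : ceq f f.
Proof. exists (fun x => x). split. constructor. reflexivity. Qed.

Lemma ceq_trans f g k : ceq f g -> ceq g k -> ceq f k.
Proof. intros [h1 [A1 B1]] [h2 [A2 B2]]. exists (gcomp h2 h1). split. constructor; auto.
  subst. reflexivity. Qed.

Lemma ceq_sym f g : ceq f g -> ceq g f.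
Proof.
  intros [h [A B]]. assert (Gh := Good_G0 h (InComm_G0 h A)).
  destruct (Good_invof h Gh) as [Hl Hr].
  exists (inv h). split. apply (Comm_inv h); auto. apply Good_invof; auto.
  subst. apply functional_extensionality; intros x. unfold gcomp. rewrite Hr. auto.
Qed.

Lemma ceq_l x f g : ceq f g -> ceq (gcomp x f) (gcomp x g).
Proof. intros [h [A B]]. exists h. split; auto. subst. reflexivity. Qed.

Lemma ceq_r x f g : InG0 x -> ceq f g -> ceq (gcomp f x) (gcomp g x).
Proof.
  intros Hx [h [A B]]. assert (Gh := Good_G0 h (InComm_G0 h A)).
  assert (Gx := Good_G0 x Hx).
  destruct (Good_invof h Gh) as [Hl Hr]. destruct (Good_invof x Gx) as [Xl Xr].
  exists (gcomp h (gcomp (inv h) (gcomp (inv x) (gcomp h x)))). split.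
  - apply Comm_comp; auto. apply Comm_gen; auto. apply InComm_G0; auto.
    apply Good_invof; auto. apply Good_invof; auto.
  - subst. apply functional_extensionality; intros t. unfold gcomp. rewrite Hr, Xr. auto.
Qed.

Lemma ceq_comm f g : InG0 f -> InG0 g -> ceq (gcomp f g) (gcomp g f).
Proof.
  intros Hf Hg. assert (Gf := Good_G0 f Hf). assert (Gg := Good_G0 g Hg).
  destruct (Good_invof f Gf) as [Fl Fr]. destruct (Good_invof g Gg) as [Gl Gr].
  exists (gcomp (inv f) (gcomp (inv g) (gcomp f g))). split.
  - apply Comm_gen; auto; apply Good_invof; auto.
  - apply functional_extensionality; intros t. unfold gcomp. rewrite Fr, Gr. auto.
Qed.

Lemma ceq_cong f1 f2 g1 g2 : InG0 g2 -> ceq f1 f2 -> ceq g1 g2 -> ceq (gcomp f1 g1) (gcomp f2 g2).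
Proof.
  intros H A B. apply ceq_trans with (gcomp f1 g2). apply ceq_l; auto. apply ceq_r; auto.
Qed.

Lemma swap_mid x p q z : InG0 p -> InG0 q -> InG0 z ->
  ceq (gcomp x (gcomp (gcomp p q) z)) (gcomp x (gcomp (gcomp q p) z)).
Proof. intros. apply ceq_l, ceq_r; auto. apply ceq_comm; auto. Qed.

Lemma W_add u v : ceq (gcomp (W u) (W v)) (W (z3add u v)).
Proof.
  destruct u as [[i j] k]. destruct v as [[i' j'] k']. cbv beta iota delta [W z3add].
  rewrite !zp_add by (apply Good_G0; constructor).
  set (A := zp ga i). set (B := zp gb j). set (C := zp gc k).
  set (A' := zp ga i'). set (B' := zp gb j'). set (C' := zp gc k').
  assert (GA' : InG0 A') by (apply zp_G0; constructor).
  assert (GB' : InG0 B') by (apply zp_G0; constructor).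
  assert (GC' : InG0 C') by (apply zp_G0; constructor).
  assert (GB : InG0 B) by (apply zp_G0; constructor).
  assert (GC : InG0 C) by (apply zp_G0; constructor).
  apply ceq_trans with (gcomp A (gcomp (gcomp A' (gcomp B C)) (gcomp B' C'))).
  - exact (swap_mid A (gcomp B C) A' (gcomp B' C') (G0_comp _ _ GB GC) GA' (G0_comp _ _ GB' GC')).
  - exact (swap_mid (gcomp A (gcomp A' B)) C B' C' GC GB' GC').
Qed.

Definition pi (f : R -> R) : Z3 := (em f, (ep f - em f)%Z, p3 f).

Lemma em_a : em ga = 1%Z. Proof. apply (em_eq _ _ 0). intros; unfold ga; simpl; ring. Qed.
Lemma ep_a : ep ga = 1%Z. Proof. apply (ep_eq _ _ 0). intros; unfold ga; simpl; ring. Qed.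
Lemma em_b : em gb = 0%Z. Proof. apply (em_eq _ _ 0). intros; rewrite gb1 by lra; simpl; ring. Qed.
Lemma ep_b : ep gb = 1%Z. Proof. apply (ep_eq _ _ 1). intros; rewrite gb4 by lra; simpl; ring. Qed.
Lemma em_c : em gc = 0%Z. Proof. apply (em_eq _ _ 0). intros; rewrite gc1 by lra; simpl; ring. Qed.
Lemma ep_c : ep gc = 0%Z. Proof. apply (ep_eq _ _ 1). intros; rewrite gc3 by lra; simpl; ring. Qed.
Lemma p3_a : p3 ga = 0%Z. Proof. apply p3_eq. constructor. rewrite Phi_zero by apply Fa0. simpl; ring. Qed.
Lemma p3_b : p3 gb = 0%Z. Proof. apply p3_eq. constructor. rewrite Phi_zero by apply Fb0. simpl; ring. Qed.
Lemma p3_c : p3 gc = 1%Z. Proof. apply p3_eq. constructor. rewrite Phi_c. unfold c2; simpl; ring. Qed.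

Lemma pi_comp f g : InG0 f -> InG0 g -> pi (gcomp f g) = z3add (pi f) (pi g).
Proof.
  intros Hf Hg. unfold pi, z3add.
  rewrite (proj2 Hom_em), (proj2 Hom_ep), (proj2 Hom_p3) by auto.
  f_equal. f_equal. lia.
Qed.

Lemma pi_id : pi (fun x => x) = z3zero.
Proof. unfold pi. rewrite (proj1 Hom_em), (proj1 Hom_ep), (proj1 Hom_p3). reflexivity. Qed.

Lemma pi_W v : pi (W v) = v.
Proof.
  unfold pi. rewrite !Hom_W by (apply Hom_em || apply Hom_ep || apply Hom_p3).
  destruct v as [[i j] k].
  rewrite em_a, ep_a, em_b, ep_b, em_c, ep_c, p3_a, p3_b, p3_c. f_equal; try f_equal; lia.
Qed.

Lemma main_ceq f : InG0 f -> ceq f (W (pi f)).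
Proof.
  induction 1.
  - rewrite pi_id. exact (ceq_refl _).
  - replace (pi ga) with ((1, 0, 0)%Z : Z3).
    2:{ unfold pi. rewrite em_a, ep_a, p3_a. reflexivity. }
    exact (ceq_refl _).
  - replace (pi gb) with ((0, 1, 0)%Z : Z3).
    2:{ unfold pi. rewrite em_b, ep_b, p3_b. reflexivity. }
    exact (ceq_refl _).
  - replace (pi gc) with ((0, 0, 1)%Z : Z3).
    2:{ unfold pi. rewrite em_c, ep_c, p3_c. reflexivity. }
    exact (ceq_refl _).
  - rewrite pi_comp by auto. apply ceq_trans with (gcomp (W (pi f)) (W (pi g))).
    apply ceq_cong; auto. apply W_G0. apply W_add.
  - assert (Hg : InG0 g) by (apply (G0_inv f); auto).
    assert (E : z3add (pi f) (pi g) = z3zero).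
    { rewrite <- pi_comp by auto. rewrite <- pi_id. f_equal.
      apply functional_extensionality; intros; apply H0. }
    set (u := pi f) in *. set (v := pi g) in *.
    assert (A : ceq (gcomp g (gcomp (W u) (W v))) g).
    { pose proof (ceq_l g _ _ (W_add u v)) as K. rewrite E in K. exact K. }
    apply ceq_sym in A.
    apply ceq_trans with (1 := A).
    assert (B : ceq (gcomp g (W u)) (gcomp g f)) by (apply ceq_l, ceq_sym; auto).
    apply (ceq_r (W v)) in B; [|apply W_G0].
    assert (C : gcomp g f = fun x => x) by (apply functional_extensionality; intros; apply H0).
    rewrite C in B. exact B.
Qed.

Lemma Hom_comm q f : Hom q -> InComm f -> q f = 0%Z.
Proof.
  intros Hq. pose proof Hq as [H0 H1]. induction 1.
  - auto.
  - assert (InG0 f') by (apply (G0_inv f); auto).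
    assert (InG0 g') by (apply (G0_inv g); auto).
    rewrite (H1 f' (gcomp g' (gcomp f g))) by (auto; apply G0_comp; auto; apply G0_comp; auto).
    rewrite (H1 g' (gcomp f g)) by (auto; apply G0_comp; auto). rewrite (H1 f g) by auto.
    rewrite (Hom_inv q f f'), (Hom_inv q g g') by auto. lia.
  - rewrite H1 by (apply InComm_G0; auto). lia.
  - rewrite (Hom_inv q f g) by (auto; apply InComm_G0; auto). lia.
Qed.

Theorem mainTheorem3 :
  exists pi : (R -> R) -> Z3,
    pi ga = (1%Z, 0%Z, 0%Z) /\ pi gb = (0%Z, 1%Z, 0%Z) /\ pi gc = (0%Z, 0%Z, 1%Z) /\
    (forall f g, InG0 f -> InG0 g -> pi (gcomp f g) = z3add (pi f) (pi g)) /\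
    (forall v : Z3, exists f, InG0 f /\ pi f = v) /\
    (forall f, InG0 f -> (pi f = z3zero <-> InComm f)).
Proof.
  exists pi. split; [|split; [|split; [|split; [|split]]]].
  - unfold pi. rewrite em_a, ep_a, p3_a. reflexivity.
  - unfold pi. rewrite em_b, ep_b, p3_b. reflexivity.
  - unfold pi. rewrite em_c, ep_c, p3_c. reflexivity.
  - apply pi_comp.
  - intros v. exists (W v). split. apply W_G0. apply pi_W.
  - intros f Hf. split.
    + intros E. destruct (main_ceq f Hf) as [h [A B]]. rewrite E in B. rewrite B. exact A.
    + intros Hc. unfold pi. rewrite (Hom_comm em f Hom_em Hc), (Hom_comm ep f Hom_ep Hc), (Hom_comm p3 f Hom_p3 Hc).
      reflexivity.
Qed.
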